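(* In the setting of the context, let $\mu_1,\mu_2$ be nowhere-equal solutions of $$\widehat e_1\cdot\nabla\mu=-C_{31}^{2}-\mu\big(C_{31}^{3}+C_{12}^{2}\big)-\mu^{2}C_{12}^{3}$$ and let $\alpha_1,\alpha_2$ be nowhere-vanishing functions satisfying $\widehat e_1\cdot\nabla\ln|\alpha_i/\Vert v\Vert|=C_{31}^{3}+\mu_iC_{12}^{3}$ for $i=1,2$. Then the Poisson vector fields $J_i=\alpha_i(\widehat e_2+\mu_i\widehat e_3)$, $i=1,2$, are compatible, i.e. $J_1+J_2$ is also a Poisson vector field.
   Context: Setting: $M$ is an oriented three-dimensional manifold with a Riemannian metric $g$; $\nabla$, $\nabla\times$ and $\times$ denote gradient, curl and cross product. A Poisson vector field is a vector field $J$ with $J\cdot(\nabla\times J)=0$; $J_1,J_2$ are compatible if $J_1+J_2$ is also Poisson. $v$ is a nowhere vanishing vector field, $\widehat e_1=v/\Vert v\Vert$, extended to a local oriented orthonormal frame $(\widehat e_1,\widehat e_2,\widehat e_3)$ with $\widehat e_3=\widehat e_1\times\widehat e_2$, and structure functions $C_{ij}^k$ defined by $[\widehat e_i,\widehat e_j]=C_{ij}^k\widehat e_k$. *)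

(* Defs.v *)
From Stdlib Require Import Reals Lra.
From Coquelicot Require Import Coquelicot.
Open Scope R_scope.

(* Points of an (oriented) coordinate chart of M, viewed as an open subset of R^3.
   Coordinates are indexed 0,1,2. *)
Definition pt := (R * R * R)%type.

Definition coord (p : pt) (i : nat) : R :=
  match i with
  | O => fst (fst p)
  | S O => snd (fst p)
  | _ => snd p
  end.

Definition upd (p : pt) (i : nat) (t : R) : pt :=
  match i with
  | O => (t, snd (fst p), snd p)
  | S O => (fst (fst p), t, snd p)
  | _ => (fst (fst p), snd (fst p), t)
  end.

Definition pd (i : nat) (f : pt -> R) (p : pt) : R :=
  Derive (fun t => f (upd p i t)) (coord p i).

Fixpoint Ck (k : nat) (U : pt -> Prop) (f : pt -> R) : Prop :=
  match k with
  | O => forall p, U p -> continuous f p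
  | S k' =>
      (forall p, U p -> continuous f p) /\
      (forall i p, (i < 3)%nat -> U p -> ex_derive (fun t => f (upd p i t)) (coord p i)) /\
      (forall i, (i < 3)%nat -> Ck k' U (pd i f))
  end.

Definition smooth (U : pt -> Prop) (f : pt -> R) : Prop := forall k, Ck k U f.

Definition sum3 (f : nat -> R) : R := f 0%nat + f 1%nat + f 2%nat.

Definition eps (a b c : nat) : R :=
  match a, b, c with
  | O, S O, S (S O) => 1 | S O, S (S O), O => 1 | S (S O), O, S O => 1
  | O, S (S O), S O => -1 | S (S O), S O, O => -1 | S O, O, S (S O) => -1
  | _, _, _ => 0
  end.

(* vector fields: component index -> point -> value (coordinate components) *)
Definition vf := nat -> pt -> R.
Definition metric := nat -> nat -> pt -> R.

Definition smooth_vf (U : pt -> Prop) (X : vf) : Prop :=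
  forall a, (a < 3)%nat -> smooth U (X a).

Definition riemannian (U : pt -> Prop) (g : metric) : Prop :=
  (forall a b, (a < 3)%nat -> (b < 3)%nat -> smooth U (g a b)) /\
  (forall a b p, U p -> g a b p = g b a p) /\
  (forall p (x : nat -> R), U p -> ~ (x 0%nat = 0 /\ x 1%nat = 0 /\ x 2%nat = 0) ->
     0 < sum3 (fun a => sum3 (fun b => g a b p * x a * x b))).

Definition dot (g : metric) (X Y : vf) (p : pt) : R :=
  sum3 (fun a => sum3 (fun b => g a b p * X a p * Y b p)).

Definition vnorm (g : metric) (X : vf) (p : pt) : R := sqrt (dot g X X p).

Definition detg (g : metric) (p : pt) : R :=
  sum3 (fun a => sum3 (fun b => sum3 (fun c =>
    eps a b c * g 0%nat a p * g 1%nat b p * g 2%nat c p))).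

(* inverse metric g^{ab} = adj(g)_{ab} / det g *)
Definition ginv (g : metric) (a b : nat) (p : pt) : R :=
  (/ 2 * sum3 (fun m => sum3 (fun n => sum3 (fun r => sum3 (fun s =>
      eps a m n * eps b r s * g m r p * g n s p))))) / detg g p.

Definition flat (g : metric) (X : vf) (c : nat) (p : pt) : R :=
  sum3 (fun d => g c d p * X d p).

Definition grad (g : metric) (f : pt -> R) : vf :=
  fun a p => sum3 (fun b => ginv g a b p * pd b f p).

(* curl w.r.t. the Riemannian volume form of the oriented chart:
   (curl X)^a = (1/sqrt det g) eps^{abc} d_b X_c *)
Definition curl (g : metric) (X : vf) : vf :=
  fun a p => / sqrt (detg g p) *
    sum3 (fun b => sum3 (fun c => eps a b c * pd b (flat g X c) p)).

(* cross product: (X x Y)_d = sqrt(det g) eps_{dbc} X^b Y^c, index raised *)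
Definition cross (g : metric) (X Y : vf) : vf :=
  fun a p => sum3 (fun d => ginv g a d p *
    (sqrt (detg g p) * sum3 (fun b => sum3 (fun c => eps d b c * X b p * Y c p)))).

Definition bracket (X Y : vf) : vf :=
  fun b p => sum3 (fun a => X a p * pd a (Y b) p - Y a p * pd a (X b) p).

Definition vadd (X Y : vf) : vf := fun a p => X a p + Y a p.

Definition poisson (U : pt -> Prop) (g : metric) (J : vf) : Prop :=
  forall p, U p -> dot g J (curl g J) p = 0.

Definition compatible (U : pt -> Prop) (g : metric) (J1 J2 : vf) : Prop :=
  poisson U g J1 /\ poisson U g J2 /\ poisson U g (vadd J1 J2).

(* the frame: e1 = v/|v|, e2 given, e3 = e1 x e2; indexed 1,2,3 as in the paper *)
Definition e1_of (g : metric) (v : vf) : vf := fun a p => v a p / vnorm g v p.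
Definition e3_of (g : metric) (v e2 : vf) : vf := cross g (e1_of g v) e2.
Definition frame (g : metric) (v e2 : vf) (i : nat) : vf :=
  match i with
  | 1%nat => e1_of g v
  | 2%nat => e2
  | _ => e3_of g v e2
  end.

Definition ddir (g : metric) (X : vf) (f : pt -> R) (p : pt) : R := dot g X (grad g f) p.

Definition Jfield (g : metric) (v e2 : vf) (alpha mu : pt -> R) : vf :=
  fun a p => alpha p * (e2 a p + mu p * e3_of g v e2 a p).

(* Main.v *)
Require Import Defs.
From Stdlib Require Import Reals Lra Lia.
From Coquelicot Require Import Coquelicot.
Open Scope R_scope.

Definition symp (g : metric) (p : pt) := forall a b, g a b p = g b a p.

Definition cof (g : metric) p (a b : nat) : R :=
  let g00 := g 0%nat 0%nat p in let g01 := g 0%nat 1%nat p in let g02 := g 0%nat 2%nat p in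
  let g11 := g 1%nat 1%nat p in let g12 := g 1%nat 2%nat p in let g22 := g 2%nat 2%nat p in
  match a, b with
  | O, O => g11*g22 - g12*g12
  | O, S O | S O, O => g02*g12 - g01*g22
  | O, S (S O) | S (S O), O => g01*g12 - g02*g11
  | S O, S O => g00*g22 - g02*g02
  | S O, S (S O) | S (S O), S O => g01*g02 - g00*g12
  | S (S O), S (S O) => g00*g11 - g01*g01
  | _, _ => 0
  end.

Definition detS (g : metric) p : R :=
  let g00 := g 0%nat 0%nat p in let g01 := g 0%nat 1%nat p in let g02 := g 0%nat 2%nat p in
  let g11 := g 1%nat 1%nat p in let g12 := g 1%nat 2%nat p in let g22 := g 2%nat 2%nat p in
  g00*(g11*g22 - g12*g12) - g01*(g01*g22 - g12*g02) + g02*(g01*g12 - g11*g02).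

Ltac symr Hs := rewrite ?(Hs 1%nat 0%nat), ?(Hs 2%nat 0%nat), ?(Hs 2%nat 1%nat).

Lemma detg_S g p : symp g p -> detg g p = detS g p.
Proof. intros Hs. unfold detg, detS, sum3, eps; simpl. symr Hs. ring. Qed.

Lemma ginv_cof g p a b : symp g p -> (a < 3)%nat -> (b < 3)%nat ->
  ginv g a b p = cof g p a b / detS g p.
Proof.
intros Hs Ha Hb. rewrite <- detg_S by auto. unfold ginv.
destruct a as [|[|[|a]]]; try lia; destruct b as [|[|[|b]]]; try lia;
unfold cof, sum3, eps; simpl; symr Hs; unfold Rdiv; apply Rmult_eq_compat_r.
all: field. Qed.

Lemma dot_sym g X Y p : symp g p -> dot g X Y p = dot g Y X p.
Proof. intros Hs. unfold dot, sum3. symr Hs. ring. Qed.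

Lemma posdef_det g p :
  symp g p ->
  (forall (x : nat -> R), ~ (x 0%nat = 0 /\ x 1%nat = 0 /\ x 2%nat = 0) ->
     0 < sum3 (fun a => sum3 (fun b => g a b p * x a * x b))) ->
  0 < detS g p.
Proof.
intros Hs Hp.
assert (H00 : 0 < g 1%nat 1%nat p).
{ specialize (Hp (fun i => match i with 1%nat => 1 | _ => 0 end)).
  unfold sum3 in Hp; simpl in Hp. assert (h: 0 < g 1%nat 1%nat p * 1 * 1).
  { replace (g 1%nat 1%nat p * 1 * 1) with
    (g 0%nat 0%nat p * 0 * 0 + g 0%nat 1%nat p * 0 * 1 + g 0%nat 2%nat p * 0 * 0 +
     (g 1%nat 0%nat p * 1 * 0 + g 1%nat 1%nat p * 1 * 1 + g 1%nat 2%nat p * 1 * 0) +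
     (g 2%nat 0%nat p * 0 * 0 + g 2%nat 1%nat p * 0 * 1 + g 2%nat 2%nat p * 0 * 0)) by ring.
    apply Hp. intros [_ [h _]]. lra. } lra. }
set (g00 := g 0%nat 0%nat p) in *. set (g01 := g 0%nat 1%nat p) in *.
set (g02 := g 0%nat 2%nat p) in *. set (g11 := g 1%nat 1%nat p) in *.
set (g12 := g 1%nat 2%nat p) in *. set (g22 := g 2%nat 2%nat p) in *.
assert (Hm : 0 < g00 * g11 - g01 * g01).
{ specialize (Hp (fun i => match i with 0%nat => g11 | 1%nat => - g01 | _ => 0 end)).
  unfold sum3 in Hp; simpl in Hp. rewrite ?(Hs 1%nat 0%nat), ?(Hs 2%nat 0%nat), ?(Hs 2%nat 1%nat) in Hp. fold g00 g01 g02 g11 g12 g22 in Hp.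
  assert (h : 0 < g11 * (g00 * g11 - g01 * g01)).
  { match type of Hp with ?A -> 0 < ?B => replace (g11 * (g00 * g11 - g01 * g01)) with B by ring end.
    apply Hp. intros [h _]. lra. }
  apply (Rmult_lt_reg_l g11); lra. }
specialize (Hp (fun i => match i with 0%nat => g01*g12 - g02*g11 | 1%nat => g01*g02 - g00*g12
   | _ => g00*g11 - g01*g01 end)).
unfold sum3 in Hp; simpl in Hp. rewrite ?(Hs 1%nat 0%nat), ?(Hs 2%nat 0%nat), ?(Hs 2%nat 1%nat) in Hp. fold g00 g01 g02 g11 g12 g22 in Hp.
assert (h : 0 < detS g p * (g00 * g11 - g01 * g01)).
{ match type of Hp with ?A -> 0 < ?B => replace (detS g p * (g00 * g11 - g01 * g01)) with B end.
  apply Hp. intros [_ [_ h]]. lra. unfold detS. fold g00 g01 g02 g11 g12 g22. ring. }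
apply (Rmult_lt_reg_r (g00 * g11 - g01 * g01)); lra.
Qed.

Ltac expand_cross Hs :=
  unfold dot, cross, sum3; rewrite ?detg_S by exact Hs;
  rewrite ?ginv_cof by (exact Hs || lia); unfold cof, detS, eps; simpl; symr Hs.

Lemma cross_orth1 g X Y p : symp g p -> 0 < detS g p -> dot g X (cross g X Y) p = 0.
Proof. intros Hs Hd. expand_cross Hs. field. unfold detS in Hd; simpl in Hd; lra. Qed.

Lemma cross_orth2 g X Y p : symp g p -> 0 < detS g p -> dot g Y (cross g X Y) p = 0.
Proof. intros Hs Hd. expand_cross Hs. field. unfold detS in Hd; simpl in Hd; lra. Qed.

Lemma cross_norm g X Y p : symp g p -> 0 < detS g p ->
  dot g (cross g X Y) (cross g X Y) p = dot g X X p * dot g Y Y p - (dot g X Y p)^2.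
Proof. intros Hs Hd.
assert (Hq : sqrt (detS g p) * sqrt (detS g p) = detS g p) by (apply sqrt_sqrt; lra).
assert (E : dot g (cross g X Y) (cross g X Y) p =
   sqrt (detS g p) * sqrt (detS g p) * (dot g X X p * dot g Y Y p - (dot g X Y p)^2) / detS g p).
{ revert Hq. unfold dot, cross; cbv beta. rewrite detg_S by exact Hs. generalize (sqrt (detS g p)). intros s Hq.
  expand_cross Hs. 
  field. unfold detS in Hd; simpl in Hd; lra. }
rewrite E, Hq. field. lra.
Qed.

Lemma ddir_simpl (g : metric) X h p : symp g p -> 0 < detS g p ->
  ddir g X h p = sum3 (fun c => X c p * pd c h p).
Proof.
intros Hs Hd. unfold ddir, dot, grad. unfold sum3.
rewrite ?ginv_cof by (exact Hs || lia). unfold cof, detS in *; simpl in *. symr Hs.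
field. lra.
Qed.

Lemma curl_aux (g : metric) (J : vf) p (D : nat -> nat -> R) s : symp g p ->
  sum3 (fun a => sum3 (fun b => g a b p * J a p *
     (/ s * sum3 (fun c => sum3 (fun d => eps b c d * D c d)))))
  = / s * sum3 (fun b => sum3 (fun c => sum3 (fun d => eps b c d * flat g J b p * D c d))).
Proof. intros Hs. unfold flat, sum3, eps; simpl. symr Hs. ring. Qed.

Lemma dot_curl g J p : symp g p ->
  dot g J (curl g J) p = / sqrt (detg g p) *
    sum3 (fun b => sum3 (fun c => sum3 (fun d => eps b c d * flat g J b p * pd c (flat g J d) p))).
Proof.
intros Hs. unfold dot, curl.
exact (curl_aux g J p (fun c d => pd c (flat g J d) p) (sqrt (detg g p)) Hs).
Qed.

Definition det3 (M : nat -> nat -> R) : R :=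
  sum3 (fun a => sum3 (fun b => sum3 (fun c => eps a b c * M 0%nat a * M 1%nat b * M 2%nat c))).

Lemma det_change (Ev : nat -> nat -> R) (W : nat -> R) (D : nat -> nat -> R) :
  det3 Ev * sum3 (fun b => sum3 (fun c => sum3 (fun d => eps b c d * W b * D c d)))
  = sum3 (fun i => sum3 (fun j => sum3 (fun k => eps i j k * sum3 (fun b => W b * Ev i b) *
      sum3 (fun c => sum3 (fun d => Ev j c * Ev k d * D c d))))).
Proof. unfold det3, sum3, eps; simpl. ring. Qed.

Lemma det_prod (A B : nat -> nat -> R) :
  det3 (fun i j => sum3 (fun c => A i c * B j c)) = det3 A * det3 B.
Proof. unfold det3, sum3, eps; simpl. ring. Qed.

Lemma det3_id : det3 (fun i j => if Nat.eqb i j then 1 else 0) = 1.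
Proof. unfold det3, sum3, eps; simpl. ring. Qed.

Definition DX (c : nat) (p : pt) (f : pt -> R) :=
  ex_derive (fun t => f (upd p c t)) (coord p c).

Lemma upd_coord p c : upd p c (coord p c) = p.
Proof. destruct p as [[x y] z]; destruct c as [|[|c]]; reflexivity. Qed.

Lemma DX_plus c p f h : DX c p f -> DX c p h -> DX c p (fun q => f q + h q).
Proof. intros H1 H2. unfold DX in *. apply (ex_derive_plus _ _ _ H1 H2). Qed.

Lemma DX_mult c p f h : DX c p f -> DX c p h -> DX c p (fun q => f q * h q).
Proof. intros H1 H2. unfold DX in *. apply (ex_derive_mult _ _ _ H1 H2). Qed.

Lemma DX_const c p (a : R) : DX c p (fun _ => a).
Proof. unfold DX. apply ex_derive_const. Qed.

Lemma DX_inv c p f : DX c p f -> f p <> 0 -> DX c p (fun q => / f q).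
Proof. intros H1 H2. unfold DX in *. apply (ex_derive_inv (fun t => f (upd p c t))); auto.
rewrite upd_coord; auto. Qed.

Lemma DX_div c p f h : DX c p f -> DX c p h -> h p <> 0 -> DX c p (fun q => f q / h q).
Proof. intros. unfold Rdiv. apply DX_mult; auto. apply DX_inv; auto. Qed.

Lemma DX_sqrt c p f : DX c p f -> 0 < f p -> DX c p (fun q => sqrt (f q)).
Proof. intros [d Hd] H2. unfold DX. eexists.
apply (is_derive_sqrt (fun t => f (upd p c t))). exact Hd. rewrite upd_coord; auto. Qed.

Lemma DX_sum3 c p (F : nat -> pt -> R) :
  DX c p (F 0%nat) -> DX c p (F 1%nat) -> DX c p (F 2%nat) ->
  DX c p (fun q => sum3 (fun i => F i q)).
Proof. intros. unfold sum3. apply DX_plus; [apply DX_plus|]; auto. Qed.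

Lemma DX_ext c p f h : (forall q, f q = h q) -> DX c p f -> DX c p h.
Proof. intros E H. unfold DX in *. eapply ex_derive_ext; [|exact H]. intros; simpl; auto. Qed.

Lemma pd_plus c p f h : DX c p f -> DX c p h ->
  pd c (fun q => f q + h q) p = pd c f p + pd c h p.
Proof. intros H1 H2. unfold pd. apply (Derive_plus (fun t => f (upd p c t)) (fun t => h (upd p c t))); auto. Qed.

Lemma pd_mult c p f h : DX c p f -> DX c p h ->
  pd c (fun q => f q * h q) p = pd c f p * h p + f p * pd c h p.
Proof. intros H1 H2. unfold pd.
rewrite (Derive_mult (fun t => f (upd p c t)) (fun t => h (upd p c t))); auto.
rewrite upd_coord. reflexivity. Qed.

Lemma pd_sum3 c p (F : nat -> pt -> R) :
  DX c p (F 0%nat) -> DX c p (F 1%nat) -> DX c p (F 2%nat) ->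
  pd c (fun q => sum3 (fun i => F i q)) p = sum3 (fun i => pd c (F i) p).
Proof. intros H0 H1 H2. unfold sum3.
rewrite (pd_plus c p (fun q => F 0%nat q + F 1%nat q) (F 2%nat) (DX_plus _ _ _ _ H0 H1) H2).
rewrite (pd_plus c p (F 0%nat) (F 1%nat) H0 H1). reflexivity. Qed.

Lemma pd_const c p (a : R) : pd c (fun _ => a) p = 0.
Proof. unfold pd. apply Derive_const. Qed.

Lemma pd_loc (U : pt -> Prop) c p f h : open U -> U p -> (forall q, U q -> f q = h q) ->
  pd c f p = pd c h p.
Proof.
intros HU Hp E. unfold pd. apply Derive_ext_loc.
destruct (HU p Hp) as [e He]. exists e. intros t Ht. apply E. apply He.
destruct p as [[x y] z]; destruct c as [|[|c]]; simpl in *.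
all: (split; [split|]). all: first [apply ball_center | exact Ht].
Qed.

Lemma smooth_DX U f c p : smooth U f -> (c < 3)%nat -> U p -> DX c p f.
Proof. intros H Hc Hp. destruct (H 1%nat) as [_ [H2 _]]. apply H2; auto. Qed.

Lemma det3_ext M N : (forall i j, (i < 3)%nat -> (j < 3)%nat -> M i j = N i j) -> det3 M = det3 N.
Proof. intros H. unfold det3, sum3. rewrite !H by lia. reflexivity. Qed.

Lemma frame_sum (f : nat -> R) (M : nat -> nat -> R) :
  sum3 (fun i => sum3 (fun j => sum3 (fun k => eps i j k * f (S i) * M (S j) (S k))))
  = f 1%nat * (M 2%nat 3%nat - M 3%nat 2%nat) + f 2%nat * (M 3%nat 1%nat - M 1%nat 3%nat)
    + f 3%nat * (M 1%nat 2%nat - M 2%nat 1%nat).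
Proof. unfold sum3, eps; simpl. ring. Qed.

Section GL.
Variables (U : pt -> Prop) (g : metric) (v e2 : vf) (C : nat -> nat -> nat -> pt -> R)
  (J : vf) (A B : pt -> R) (p : pt).

Let E := frame g v e2.
Definition Ff (k : nat) (q : pt) := sum3 (fun d => flat g J d q * frame g v e2 k d q).
Definition Mf (j k : nat) := sum3 (fun c => sum3 (fun d =>
   frame g v e2 j c p * frame g v e2 k d p * pd c (flat g J d) p)).
Definition eX (k : nat) (h : pt -> R) := sum3 (fun c => frame g v e2 k c p * pd c h p).

Hypothesis HDw : forall c d, (c < 3)%nat -> (d < 3)%nat -> DX c p (flat g J d).
Hypothesis HDe : forall c k d, (c < 3)%nat -> (d < 3)%nat -> DX c p (frame g v e2 k d).

Lemma Mdiff j k : Mf j k - Mf k j =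
  eX j (Ff k) - eX k (Ff j) - sum3 (fun d => flat g J d p * bracket (E j) (E k) d p).
Proof.
unfold eX, Mf, bracket, E.
assert (Hp : forall c l, (c < 3)%nat -> pd c (Ff l) p
   = sum3 (fun d => pd c (flat g J d) p * frame g v e2 l d p + flat g J d p * pd c (frame g v e2 l d) p)).
{ intros c l Hc.
  assert (W0 := HDw c 0%nat Hc ltac:(lia)). assert (W1 := HDw c 1%nat Hc ltac:(lia)). assert (W2 := HDw c 2%nat Hc ltac:(lia)).
  assert (V0 := HDe c l 0%nat Hc ltac:(lia)). assert (V1 := HDe c l 1%nat Hc ltac:(lia)). assert (V2 := HDe c l 2%nat Hc ltac:(lia)).
  unfold Ff. rewrite (pd_sum3 c p (fun d q => flat g J d q * frame g v e2 l d q) (DX_mult _ _ _ _ W0 V0) (DX_mult _ _ _ _ W1 V1) (DX_mult _ _ _ _ W2 V2)).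
  unfold sum3; cbv beta.
  rewrite (pd_mult c p _ _ W0 V0), (pd_mult c p _ _ W1 V1), (pd_mult c p _ _ W2 V2). reflexivity. }
unfold sum3. rewrite !Hp by lia. unfold sum3. ring.
Qed.

Hypothesis HU : open U.
Hypothesis Hp : U p.
Hypothesis Hs : symp g p.
Hypothesis Hgram : forall i j, (i < 3)%nat -> (j < 3)%nat ->
  sum3 (fun c => flat g (frame g v e2 (S i)) c p * frame g v e2 (S j) c p) = if Nat.eqb i j then 1 else 0.
Hypothesis HC : forall i j b, (1 <= i <= 3)%nat -> (1 <= j <= 3)%nat ->
     bracket (frame g v e2 i) (frame g v e2 j) b p
     = C i j 1%nat p * frame g v e2 1%nat b p
       + C i j 2%nat p * frame g v e2 2%nat b p
       + C i j 3%nat p * frame g v e2 3%nat b p.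
Hypothesis HF : forall q, U q -> Ff 1%nat q = 0 /\ Ff 2%nat q = A q /\ Ff 3%nat q = B q.

Lemma eX_loc k h1 h2 : (forall q, U q -> h1 q = h2 q) -> eX k h1 = eX k h2.
Proof. intros H. unfold eX, sum3. rewrite !(pd_loc U _ p h1 h2 HU Hp H). reflexivity. Qed.

Lemma brk j k : (1 <= j <= 3)%nat -> (1 <= k <= 3)%nat ->
  sum3 (fun d => flat g J d p * bracket (E j) (E k) d p)
  = C j k 1%nat p * Ff 1%nat p + C j k 2%nat p * Ff 2%nat p + C j k 3%nat p * Ff 3%nat p.
Proof. intros Hj Hk. unfold E, sum3. rewrite !HC by auto. unfold Ff, sum3. ring. Qed.

Lemma GL_main :
  A p * (- eX 1%nat B - C 3%nat 1%nat 2%nat p * A p - C 3%nat 1%nat 3%nat p * B p)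
  + B p * (eX 1%nat A - C 1%nat 2%nat 2%nat p * A p - C 1%nat 2%nat 3%nat p * B p) = 0 ->
  dot g J (curl g J) p = 0.
Proof.
intros Hfin. rewrite dot_curl by exact Hs.
set (T := sum3 (fun b => sum3 (fun c => sum3 (fun d => eps b c d * flat g J b p * pd c (flat g J d) p)))).
assert (HdetE : det3 (fun i c => frame g v e2 (S i) c p) <> 0).
{ intro H0. pose proof (det_prod (fun i c => flat g (frame g v e2 (S i)) c p) (fun j c => frame g v e2 (S j) c p)) as e.
  rewrite (det3_ext _ (fun i j => if Nat.eqb i j then 1 else 0)) in e.
  - rewrite det3_id, H0 in e. lra.
  - intros; apply Hgram; auto. }
assert (HT : det3 (fun i c => frame g v e2 (S i) c p) * T =
   Ff 1%nat p * (Mf 2%nat 3%nat - Mf 3%nat 2%nat) + Ff 2%nat p * (Mf 3%nat 1%nat - Mf 1%nat 3%nat)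
    + Ff 3%nat p * (Mf 1%nat 2%nat - Mf 2%nat 1%nat)).
{ unfold T. rewrite det_change. exact (frame_sum (fun k => Ff k p) Mf). }
destruct (HF p Hp) as [F1 [F2 F3]].
rewrite (Mdiff 3%nat 1%nat), (Mdiff 1%nat 2%nat), !brk in HT by lia.
rewrite (eX_loc 3%nat (Ff 1%nat) (fun _ => 0)), (eX_loc 2%nat (Ff 1%nat) (fun _ => 0)),
  (eX_loc 1%nat (Ff 2%nat) A), (eX_loc 1%nat (Ff 3%nat) B) in HT
  by (intros q Hq; destruct (HF q Hq) as [? [? ?]]; auto).
assert (Z : forall k, eX k (fun _ => 0) = 0).
{ intros k. unfold eX, sum3. rewrite !pd_const. ring. }
rewrite !Z, F1, F2, F3 in HT.
assert (HT0 : det3 (fun i c => frame g v e2 (S i) c p) * T = 0).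
{ rewrite HT. etransitivity; [|exact Hfin]. ring. }
apply Rmult_integral in HT0. destruct HT0 as [H0|H0]; [contradiction|]. rewrite H0. ring.
Qed.

End GL.

Lemma is_derive_lnabs y0 : y0 <> 0 -> is_derive (fun y => ln (Rabs y)) y0 (/ y0).
Proof.
intros H. destruct (Rlt_or_le 0 y0) as [Hp|Hn].
- apply (is_derive_ext_loc ln). 
  + apply (filter_imp (fun u => 0 < u)). intros u Hu. rewrite Rabs_pos_eq; auto; lra.
    apply (open_gt 0 y0 Hp).
  + apply is_derive_ln; auto.
- apply (is_derive_ext_loc (fun t => ln (- t))).
  + apply (filter_imp (fun u => u < 0)). intros u Hu. rewrite Rabs_left; auto.
    apply (open_lt 0 y0). lra.
  + auto_derive. lra. field. lra.
Qed.

Lemma pd_lnabs c p (a n : pt -> R) : DX c p a -> DX c p n -> a p <> 0 -> 0 < n p ->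
  pd c (fun q => ln (Rabs (a q / n q))) p = pd c a p / a p - pd c n p / n p.
Proof.
intros [da Ha] [dn Hn] Ha0 Hn0. unfold pd.
assert (Ea : Derive (fun t => a (upd p c t)) (coord p c) = da) by (apply is_derive_unique; exact Ha).
assert (En : Derive (fun t => n (upd p c t)) (coord p c) = dn) by (apply is_derive_unique; exact Hn).
rewrite Ea, En.
replace (da / a p - dn / n p) with (scal ((da * n p - a p * dn) / n p ^ 2) (/ (a p / n p))).
2:{ unfold scal; simpl; unfold mult; simpl. field. split; lra. }
apply is_derive_unique.
pose proof (is_derive_div _ _ _ _ _ Ha Hn) as Hd.
cbv beta in Hd. rewrite !upd_coord in Hd. specialize (Hd ltac:(lra)).
apply (is_derive_comp (fun y => ln (Rabs y)) (fun t => a (upd p c t) / n (upd p c t))); [| exact Hd].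
cbv beta. rewrite !upd_coord. apply is_derive_lnabs.
unfold Rdiv; apply Rmult_integral_contrapositive_currified; [lra| apply Rinv_neq_0_compat; lra].
Qed.

Lemma riem_sym U g q : riemannian U g -> U q -> symp g q.
Proof. intros [_ [H _]] Hq a b. apply H; auto. Qed.

Lemma riem_det U g q : riemannian U g -> U q -> 0 < detS g q.
Proof. intros HR Hq. apply posdef_det. eapply riem_sym; eauto.
intros x Hx. destruct HR as [_ [_ H]]. apply H; auto. Qed.

Lemma riem_vv U g (v : vf) q : riemannian U g -> U q ->
  ~ (v 0%nat q = 0 /\ v 1%nat q = 0 /\ v 2%nat q = 0) -> 0 < dot g v v q.
Proof. intros [_ [_ H]] Hq Hv. unfold dot. apply (H q (fun a => v a q)); auto. Qed.

Lemma dot_e1e1 g (v : vf) q : 0 < dot g v v q -> dot g (e1_of g v) (e1_of g v) q = 1.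
Proof.
intros H. assert (E : vnorm g v q * vnorm g v q = dot g v v q) by (apply sqrt_sqrt; lra).
assert (N : 0 < vnorm g v q) by (apply sqrt_lt_R0; lra).
assert (E2 : dot g (e1_of g v) (e1_of g v) q = dot g v v q / (vnorm g v q * vnorm g v q)).
{ unfold dot at 1, e1_of. unfold dot, sum3. field. lra. }
rewrite E2, E. field. lra.
Qed.

Lemma flat_dot g X Y q : symp g q -> sum3 (fun c => flat g X c q * Y c q) = dot g X Y q.
Proof. intros Hs. unfold flat, dot, sum3. symr Hs. ring. Qed.

Section Orth.
Variables (g : metric) (v e2 : vf) (q : pt).
Hypothesis Hs : symp g q.
Hypothesis Hd : 0 < detS g q.
Hypothesis Hv : 0 < dot g v v q.
Hypothesis H12 : dot g (e1_of g v) e2 q = 0.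
Hypothesis H22 : dot g e2 e2 q = 1.

Lemma frame_orth i j : (1 <= i <= 3)%nat -> (1 <= j <= 3)%nat ->
  dot g (frame g v e2 i) (frame g v e2 j) q = if Nat.eqb i j then 1 else 0.
Proof.
intros Hi Hj.
destruct i as [|[|[|[|i]]]]; try lia; destruct j as [|[|[|[|j]]]]; try lia; simpl; unfold e3_of.
- apply dot_e1e1; auto.
- exact H12.
- apply cross_orth1; auto.
- rewrite dot_sym; auto.
- exact H22.
- apply cross_orth2; auto.
- rewrite dot_sym; auto. apply cross_orth1; auto.
- rewrite dot_sym; auto. apply cross_orth2; auto.
- rewrite cross_norm; auto. rewrite dot_e1e1, H12, H22; auto. ring.
Qed.
End Orth.

Lemma dot_J g (v e2 : vf) (al mu : pt -> R) (Y : vf) q :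
  dot g (Jfield g v e2 al mu) Y q = al q * (dot g e2 Y q + mu q * dot g (e3_of g v e2) Y q).
Proof. unfold dot, Jfield, sum3. ring. Qed.

Lemma dot_vadd g (X1 X2 Y : vf) q : dot g (vadd X1 X2) Y q = dot g X1 Y q + dot g X2 Y q.
Proof. unfold dot, vadd, sum3. ring. Qed.

Lemma DX_opp c p f : DX c p f -> DX c p (fun q => - f q).
Proof. intros H. apply (DX_ext c p (fun q => (-1) * f q)). intros; ring.
apply DX_mult; auto. apply DX_const. Qed.

Section DXs.
Variables (U : pt -> Prop) (g : metric) (v e2 : vf) (p : pt) (c : nat).
Hypothesis Hg : forall a b, (a < 3)%nat -> (b < 3)%nat -> DX c p (g a b).
Hypothesis Hvd : forall a, (a < 3)%nat -> DX c p (v a).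
Hypothesis He2d : forall a, (a < 3)%nat -> DX c p (e2 a).
Hypothesis Hs : symp g p.
Hypothesis Hd : 0 < detS g p.
Hypothesis Hv : 0 < dot g v v p.

Ltac dxs leaf :=
  repeat match goal with
  | |- DX _ _ (fun _ => ?a) => apply (DX_const _ _ a)
  | |- DX ?c ?p (fun q => sum3 (fun i => @?F q i)) => apply (DX_sum3 c p (fun i q => F q i)); cbv beta
  | |- DX ?c ?p (fun q => @?f q + @?h q) => apply (DX_plus c p f h)
  | |- DX ?c ?p (fun q => @?f q * @?h q) => apply (DX_mult c p f h)
  | |- DX ?c ?p (fun q => - @?f q) => apply (DX_opp c p f)
  | |- DX _ _ _ => leaf
  end.

Ltac gleaf := match goal with
  | |- DX _ _ (fun q => g ?a ?b q) => exact (Hg a b ltac:(lia) ltac:(lia)) end.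
Ltac dx := dxs ltac:(idtac; gleaf).

Lemma DX_detg : DX c p (detg g).
Proof. unfold detg. dx. Qed.

Lemma DX_ginv a b : DX c p (ginv g a b).
Proof. unfold ginv. apply DX_div. dx. apply DX_detg. rewrite detg_S; auto; lra. Qed.

Lemma DX_sqrtdet : DX c p (fun q => sqrt (detg g q)).
Proof. apply DX_sqrt. apply DX_detg. rewrite detg_S; auto. Qed.

Lemma DX_dot (X Y : vf) : (forall a, (a < 3)%nat -> DX c p (X a)) -> (forall a, (a < 3)%nat -> DX c p (Y a)) ->
  DX c p (dot g X Y).
Proof. intros HX HY. unfold dot.
dxs ltac:(idtac; match goal with
  | |- DX _ _ (fun q => g ?a ?b q) => exact (Hg a b ltac:(lia) ltac:(lia))
  | |- DX _ _ (fun q => X ?a q) => exact (HX a ltac:(lia))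
  | |- DX _ _ (fun q => Y ?a q) => exact (HY a ltac:(lia)) end).
Qed.

Lemma DX_e1 a : (a < 3)%nat -> DX c p (e1_of g v a).
Proof. intros Ha. unfold e1_of. apply DX_div. apply Hvd; auto.
unfold vnorm. apply DX_sqrt. apply DX_dot; auto. auto.
unfold vnorm. apply Rgt_not_eq. apply sqrt_lt_R0. auto. Qed.

Lemma DX_e3 a : DX c p (e3_of g v e2 a).
Proof. unfold e3_of, cross.
dxs ltac:(idtac; match goal with
  | |- DX _ _ (fun q => ginv g ?a ?b q) => exact (DX_ginv a b)
  | |- DX _ _ (fun q => sqrt (detg g q)) => exact DX_sqrtdet
  | |- DX _ _ (fun q => e1_of g v ?a q) => exact (DX_e1 a ltac:(lia))
  | |- DX _ _ (fun q => e2 ?a q) => exact (He2d a ltac:(lia)) end).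
Qed.

Lemma DX_frame k d : (d < 3)%nat -> DX c p (frame g v e2 k d).
Proof. intros Hd3. destruct k as [|[|[|k]]].
- exact (DX_e3 d).
- exact (DX_e1 d Hd3).
- exact (He2d d Hd3).
- exact (DX_e3 d).
Qed.

Lemma DX_flat (J : vf) d : (forall a, (a < 3)%nat -> DX c p (J a)) -> (d < 3)%nat -> DX c p (flat g J d).
Proof. intros HJ Hd3. unfold flat.
dxs ltac:(idtac; match goal with
  | |- DX _ _ (fun q => g ?a ?b q) => exact (Hg a b ltac:(lia) ltac:(lia))
  | |- DX _ _ (fun q => J ?a q) => exact (HJ a ltac:(lia)) end).
Qed.

Lemma DX_J (al mu : pt -> R) a : DX c p al -> DX c p mu -> (a < 3)%nat -> DX c p (Jfield g v e2 al mu a).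
Proof. intros H1 H2 Ha. unfold Jfield. apply DX_mult; auto. apply DX_plus. apply He2d; auto.
apply DX_mult; auto. apply DX_e3. Qed.

End DXs.

Lemma eX_plus g v e2 p k f h : (forall c, (c < 3)%nat -> DX c p f) -> (forall c, (c < 3)%nat -> DX c p h) ->
  eX g v e2 p k (fun q => f q + h q) = eX g v e2 p k f + eX g v e2 p k h.
Proof. intros Hf Hh. unfold eX, sum3. rewrite !pd_plus by (apply Hf || apply Hh; lia). ring. Qed.

Lemma eX_mult g v e2 p k f h : (forall c, (c < 3)%nat -> DX c p f) -> (forall c, (c < 3)%nat -> DX c p h) ->
  eX g v e2 p k (fun q => f q * h q) = eX g v e2 p k f * h p + f p * eX g v e2 p k h.
Proof. intros Hf Hh. unfold eX, sum3. rewrite !pd_mult by (apply Hf || apply Hh; lia). ring. Qed.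

Lemma Ff_vadd g v e2 J1 J2 k q : Ff g v e2 (vadd J1 J2) k q = Ff g v e2 J1 k q + Ff g v e2 J2 k q.
Proof. unfold Ff, flat, vadd, sum3. ring. Qed.

Theorem corollary1 (U : pt -> Prop) (g : metric) (v e2 : vf)
  (C : nat -> nat -> nat -> pt -> R) (mu1 mu2 alpha1 alpha2 : pt -> R) :
  open U ->
  riemannian U g ->
  smooth_vf U v ->
  (forall p, U p -> ~ (v 0%nat p = 0 /\ v 1%nat p = 0 /\ v 2%nat p = 0)) ->
  smooth_vf U e2 ->
  (forall p, U p -> dot g (e1_of g v) e2 p = 0 /\ dot g e2 e2 p = 1) ->
  (* structure functions: [e_i, e_j] = C_ij^k e_k, i,j,k in {1,2,3} *)
  (forall i j b p, (1 <= i <= 3)%nat -> (1 <= j <= 3)%nat -> U p ->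
     bracket (frame g v e2 i) (frame g v e2 j) b p
     = C i j 1%nat p * frame g v e2 1%nat b p
       + C i j 2%nat p * frame g v e2 2%nat b p
       + C i j 3%nat p * frame g v e2 3%nat b p) ->
  smooth U mu1 -> smooth U mu2 ->
  (forall p, U p -> mu1 p <> mu2 p) ->
  (forall p, U p -> ddir g (e1_of g v) mu1 p
     = - C 3%nat 1%nat 2%nat p - mu1 p * (C 3%nat 1%nat 3%nat p + C 1%nat 2%nat 2%nat p)
       - mu1 p ^ 2 * C 1%nat 2%nat 3%nat p) ->
  (forall p, U p -> ddir g (e1_of g v) mu2 p
     = - C 3%nat 1%nat 2%nat p - mu2 p * (C 3%nat 1%nat 3%nat p + C 1%nat 2%nat 2%nat p)
       - mu2 p ^ 2 * C 1%nat 2%nat 3%nat p) ->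
  smooth U alpha1 -> smooth U alpha2 ->
  (forall p, U p -> alpha1 p <> 0) ->
  (forall p, U p -> alpha2 p <> 0) ->
  (forall p, U p -> ddir g (e1_of g v) (fun q => ln (Rabs (alpha1 q / vnorm g v q))) p
     = C 3%nat 1%nat 3%nat p + mu1 p * C 1%nat 2%nat 3%nat p) ->
  (forall p, U p -> ddir g (e1_of g v) (fun q => ln (Rabs (alpha2 q / vnorm g v q))) p
     = C 3%nat 1%nat 3%nat p + mu2 p * C 1%nat 2%nat 3%nat p) ->
  compatible U g (Jfield g v e2 alpha1 mu1) (Jfield g v e2 alpha2 mu2).
Proof.
intros HUo HR Hvs Hvnz He2s Horth HC Hm1 Hm2 Hneq Hmu1 Hmu2 Ha1 Ha2 Ha1nz Ha2nz Hln1 Hln2.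
assert (Sym : forall q, U q -> symp g q) by (intros; eapply riem_sym; eauto).
assert (Det : forall q, U q -> 0 < detS g q) by (intros; eapply riem_det; eauto).
assert (VV : forall q, U q -> 0 < dot g v v q) by (intros; eapply riem_vv; eauto).
assert (ON : forall q i j, U q -> (1 <= i <= 3)%nat -> (1 <= j <= 3)%nat ->
   dot g (frame g v e2 i) (frame g v e2 j) q = if Nat.eqb i j then 1 else 0).
{ intros q i j Hq Hi Hj. destruct (Horth q Hq). apply frame_orth; auto. }
assert (FfJ : forall al mu q k, U q -> Ff g v e2 (Jfield g v e2 al mu) k q =
   al q * (dot g (frame g v e2 2%nat) (frame g v e2 k) q + mu q * dot g (frame g v e2 3%nat) (frame g v e2 k) q)).
{ intros. unfold Ff. rewrite flat_dot by (apply Sym; auto). apply dot_J. }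
assert (HF1 : forall al mu q, U q -> Ff g v e2 (Jfield g v e2 al mu) 1%nat q = 0 /\
   Ff g v e2 (Jfield g v e2 al mu) 2%nat q = al q /\ Ff g v e2 (Jfield g v e2 al mu) 3%nat q = al q * mu q).
{ intros al mu q Hq. rewrite !FfJ by auto. rewrite !ON by (auto; lia). simpl.
  split; [ring|split;ring]. }
assert (KEY : forall J A B p, U p -> (forall c d, (c < 3)%nat -> (d < 3)%nat -> DX c p (flat g J d)) ->
  (forall q, U q -> Ff g v e2 J 1%nat q = 0 /\ Ff g v e2 J 2%nat q = A q /\ Ff g v e2 J 3%nat q = B q) ->
  A p * (- eX g v e2 p 1%nat B - C 3%nat 1%nat 2%nat p * A p - C 3%nat 1%nat 3%nat p * B p)
  + B p * (eX g v e2 p 1%nat A - C 1%nat 2%nat 2%nat p * A p - C 1%nat 2%nat 3%nat p * B p) = 0 ->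
  dot g J (curl g J) p = 0).
{ intros J A B p Hp HDw HF Hfin. apply (GL_main U g v e2 C J A B p); auto.
  - intros c k d Hc Hd. apply DX_frame; auto.
    + intros a b Ha Hb. apply smooth_DX with U; auto. destruct HR as [HRs _]. apply HRs; auto.
    + intros a Ha. apply smooth_DX with U; auto.
    + intros a Ha. apply smooth_DX with U; auto.
  - intros i j Hi Hj. rewrite flat_dot by auto. rewrite ON by (auto; lia). reflexivity. }
assert (Main : forall p, U p ->
  dot g (Jfield g v e2 alpha1 mu1) (curl g (Jfield g v e2 alpha1 mu1)) p = 0 /\
  dot g (Jfield g v e2 alpha2 mu2) (curl g (Jfield g v e2 alpha2 mu2)) p = 0 /\
  dot g (vadd (Jfield g v e2 alpha1 mu1) (Jfield g v e2 alpha2 mu2))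
        (curl g (vadd (Jfield g v e2 alpha1 mu1) (Jfield g v e2 alpha2 mu2))) p = 0).
2:{ unfold compatible, poisson. split; [|split]; intros p Hp; apply Main; auto. }
intros p Hp.
assert (Hg : forall c, (c < 3)%nat -> forall a b, (a < 3)%nat -> (b < 3)%nat -> DX c p (g a b)).
{ intros c Hc a b Ha Hb. apply smooth_DX with U; auto. destruct HR as [HRs _]. apply HRs; auto. }
assert (Hvd : forall c, (c < 3)%nat -> forall a, (a < 3)%nat -> DX c p (v a)).
{ intros c Hc a Ha. apply smooth_DX with U; auto. }
assert (He2d : forall c, (c < 3)%nat -> forall a, (a < 3)%nat -> DX c p (e2 a)).
{ intros c Hc a Ha. apply smooth_DX with U; auto. }
assert (DA1 : forall c, (c < 3)%nat -> DX c p alpha1) by (intros; apply smooth_DX with U; auto).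
assert (DA2 : forall c, (c < 3)%nat -> DX c p alpha2) by (intros; apply smooth_DX with U; auto).
assert (DM1 : forall c, (c < 3)%nat -> DX c p mu1) by (intros; apply smooth_DX with U; auto).
assert (DM2 : forall c, (c < 3)%nat -> DX c p mu2) by (intros; apply smooth_DX with U; auto).
assert (DN : forall c, (c < 3)%nat -> DX c p (vnorm g v)).
{ intros c Hc. unfold vnorm. apply DX_sqrt. apply DX_dot; auto. auto. }
assert (Npos : 0 < vnorm g v p) by (apply sqrt_lt_R0; auto).
assert (DJ : forall al mu, (forall c, (c < 3)%nat -> DX c p al) -> (forall c, (c < 3)%nat -> DX c p mu) ->
   forall c a, (c < 3)%nat -> (a < 3)%nat -> DX c p (Jfield g v e2 al mu a)).
{ intros al mu H1 H2 c a Hc Ha. apply DX_J; auto. }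
assert (DF : forall J, (forall c a, (c < 3)%nat -> (a < 3)%nat -> DX c p (J a)) ->
   forall c d, (c < 3)%nat -> (d < 3)%nat -> DX c p (flat g J d)).
{ intros J HJ c d Hc Hd. apply DX_flat; auto. }
assert (M1 : eX g v e2 p 1%nat mu1 = - C 3%nat 1%nat 2%nat p - mu1 p * (C 3%nat 1%nat 3%nat p + C 1%nat 2%nat 2%nat p)
       - mu1 p ^ 2 * C 1%nat 2%nat 3%nat p).
{ rewrite <- (Hmu1 p Hp), ddir_simpl by auto. reflexivity. }
assert (M2 : eX g v e2 p 1%nat mu2 = - C 3%nat 1%nat 2%nat p - mu2 p * (C 3%nat 1%nat 3%nat p + C 1%nat 2%nat 2%nat p)
       - mu2 p ^ 2 * C 1%nat 2%nat 3%nat p).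
{ rewrite <- (Hmu2 p Hp), ddir_simpl by auto. reflexivity. }
assert (LN : forall al, (forall c, (c < 3)%nat -> DX c p al) -> al p <> 0 ->
   ddir g (e1_of g v) (fun q => ln (Rabs (al q / vnorm g v q))) p
   = eX g v e2 p 1%nat al / al p - eX g v e2 p 1%nat (vnorm g v) / vnorm g v p).
{ intros al Hal Hal0. rewrite ddir_simpl by auto. unfold eX, sum3.
  rewrite !pd_lnabs by (auto; lia). simpl. field. split; lra. }
set (k := eX g v e2 p 1%nat (vnorm g v) / vnorm g v p) in *.
assert (L1 : eX g v e2 p 1%nat alpha1 = alpha1 p * (C 3%nat 1%nat 3%nat p + mu1 p * C 1%nat 2%nat 3%nat p + k)).
{ rewrite <- (Hln1 p Hp), LN by auto. field. auto. }
assert (L2 : eX g v e2 p 1%nat alpha2 = alpha2 p * (C 3%nat 1%nat 3%nat p + mu2 p * C 1%nat 2%nat 3%nat p + k)).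
{ rewrite <- (Hln2 p Hp), LN by auto. field. auto. }
split; [|split].
- apply (KEY _ alpha1 (fun q => alpha1 q * mu1 q) p Hp).
  + apply DF. apply DJ; auto.
  + intros q Hq. apply HF1; auto.
  + rewrite eX_mult by auto. rewrite L1, M1. ring.
- apply (KEY _ alpha2 (fun q => alpha2 q * mu2 q) p Hp).
  + apply DF. apply DJ; auto.
  + intros q Hq. apply HF1; auto.
  + rewrite eX_mult by auto. rewrite L2, M2. ring.
- apply (KEY _ (fun q => alpha1 q + alpha2 q) (fun q => alpha1 q * mu1 q + alpha2 q * mu2 q) p Hp).
  + apply DF. intros c a Hc Ha. unfold vadd. apply DX_plus; apply DJ; auto.
  + intros q Hq. rewrite !Ff_vadd. destruct (HF1 alpha1 mu1 q Hq) as [X1 [X2 X3]].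
    destruct (HF1 alpha2 mu2 q Hq) as [Y1 [Y2 Y3]]. rewrite X1, X2, X3, Y1, Y2, Y3.
    split; [ring|split; reflexivity].
  + rewrite (eX_plus g v e2 p 1%nat alpha1 alpha2) by auto.
    rewrite (eX_plus g v e2 p 1%nat (fun q => alpha1 q * mu1 q) (fun q => alpha2 q * mu2 q))
      by (intros; apply DX_mult; auto).
    rewrite !eX_mult by auto. rewrite L1, L2, M1, M2. ring.
Qed.
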